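(* For every privacy definition $\mathrm{Priv}$, the set $\mathrm{rowcone}(\mathrm{Priv})$ is a convex cone.
   Context: An algorithm $\mathcal{M}$ has a countable input domain $\mathbb{I}=\{D_1,D_2,\dots\}$ and a countable range; it is identified with its output probabilities $P(\mathcal{M}(D)=\omega)$. A privacy definition is a set of algorithms with the same input domain $\mathbb{I}$. For algorithms $\mathcal{M}$ and $\mathcal{A}$ with $\mathrm{range}(\mathcal{M})\subseteq\mathrm{domain}(\mathcal{A})$ and independent randomness, $\mathcal{A}\circ\mathcal{M}$ runs $\mathcal{M}$ and then runs $\mathcal{A}$ on its output. The consistent normal form $\mathrm{CNF}(\mathrm{Priv})$ is the smallest set $S$ of algorithms containing $\mathrm{Priv}$ such that whenever $\mathcal{M}\in S$ and $\mathcal{A}$ is any algorithm whose domain contains $\mathrm{range}(\mathcal{M})$ with independent random bits, then $\mathcal{A}\circ\mathcal{M}\in S$; and whenever $\mathcal{M}_1,\mathcal{M}_2\in S$ and $p\in[0,1]$, the algorithm that runs $\mathcal{M}_1$ with probability $p$ and $\mathcal{M}_2$ with probability $1-p$ belongs to $S$. The row cone is $\mathrm{rowcone}(\mathrm{Priv})=\{(c\,P[\mathcal{M}(D_1)=\omega],\,c\,P[\mathcal{M}(D_2)=\omega],\dots) : c\ge 0,\ \mathcal{M}\in\mathrm{CNF}(\mathrm{Priv}),\ \omega\in\mathrm{range}(\mathcal{M})\}$, a set of real vectors indexed by $\mathbb{I}$. *)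

(* Defs.v *)
From Stdlib Require Import Reals.
From Coquelicot Require Import Coquelicot.
Open Scope R_scope.

(* An algorithm with input domain I and countable range: its outputs are
   encoded as natural numbers (every countable range embeds in nat).
   It is identified with its output probabilities M D w = P(M(D) = w). *)
Definition alg (I : Type) := I -> nat -> R.

Definition is_distribution (p : nat -> R) : Prop :=
  (forall w, 0 <= p w) /\ is_series p 1.

Definition is_alg {I : Type} (M : alg I) : Prop :=
  forall D, is_distribution (M D).

Definition privacy_definition (I : Type) (Priv : alg I -> Prop) : Prop :=
  forall M, Priv M -> is_alg M.

Definition in_range {I : Type} (M : alg I) (w : nat) : Prop :=
  exists D, 0 < M D w.

(* Consistent normal form: smallest set containing Priv, closed under
   postprocessing (with independent randomness) and convex mixtures. *)
Inductive CNF {I : Type} (Priv : alg I -> Prop) : alg I -> Prop :=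
| CNF_base M : Priv M -> CNF Priv M
| CNF_post (M : alg I) (A : nat -> nat -> R) (M' : alg I) :
    CNF Priv M ->
    (forall w, is_distribution (A w)) ->
    (forall D w', is_series (fun w => M D w * A w w') (M' D w')) ->
    CNF Priv M'
| CNF_mix (M1 M2 : alg I) (p : R) :
    CNF Priv M1 -> CNF Priv M2 -> 0 <= p <= 1 ->
    CNF Priv (fun D w => p * M1 D w + (1 - p) * M2 D w).

Definition rowcone {I : Type} (Priv : alg I -> Prop) (v : I -> R) : Prop :=
  exists (c : R) (M : alg I) (w : nat),
    0 <= c /\ CNF Priv M /\ in_range M w /\ v = (fun D => c * M D w).

Definition convex_cone {I : Type} (S : (I -> R) -> Prop) : Prop :=
  forall (x y : I -> R) (a b : R),
    S x -> S y -> 0 <= a -> 0 <= b -> S (fun D => a * x D + b * y D).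

(* Main.v *)
Require Import Defs.
From Stdlib Require Import Reals Lra Lia Arith FunctionalExtensionality.
From Coquelicot Require Import Coquelicot.
Open Scope R_scope.

Lemma series_nonneg (a : nat -> R) l : (forall n, 0 <= a n) -> is_series a l -> 0 <= l.
Proof.
  intros Ha Hs.
  assert (H : Rbar_le (Finite 0) (Finite l)).
  { apply (is_lim_seq_le (fun _ => 0) (sum_n a)).
    - intros n; induction n.
      + rewrite sum_O; apply Ha.
      + rewrite sum_Sn. unfold plus; simpl. specialize (Ha (S n)). lra.
    - apply is_lim_seq_const.
    - exact Hs. }
  exact H.
Qed.

Lemma series_single (g : nat -> R) n : (forall k, k <> n -> g k = 0) -> is_series g (g n).
Proof.
  intros Hg.
  assert (E : forall N, sum_n g N = if Nat.leb n N then g n else 0).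
  { induction N.
    - rewrite sum_O. destruct n; simpl; [reflexivity|]. apply Hg; lia.
    - rewrite sum_Sn, IHN. unfold plus; simpl.
      destruct (Nat.leb n N) eqn:E1; destruct (Nat.leb n (S N)) eqn:E2.
      + rewrite (Hg (S N)); [lra|]. apply Nat.leb_le in E1; lia.
      + apply Nat.leb_le in E1; apply Nat.leb_gt in E2; lia.
      + apply Nat.leb_gt in E1; apply Nat.leb_le in E2.
        assert (n = S N) by lia; subst; lra.
      + rewrite Hg; [lra|]. apply Nat.leb_gt in E2; lia. }
  change (is_lim_seq (sum_n g) (g n)).
  apply is_lim_seq_ext_loc with (fun _ => g n).
  - exists n. intros N HN. rewrite E. apply Nat.leb_le in HN. rewrite HN. reflexivity.
  - apply is_lim_seq_const.
Qed.

Definition swap (a : nat) (w : nat) : nat :=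
  if Nat.eqb w a then 0%nat else if Nat.eqb w 0 then a else w.

Lemma swap_swap a w : swap a (swap a w) = w.
Proof.
  unfold swap.
  destruct (Nat.eqb_spec w a) as [->|Hwa].
  - rewrite Nat.eqb_refl. destruct a; simpl; auto.
  - destruct (Nat.eqb_spec w 0) as [->|Hw0].
    + rewrite Nat.eqb_refl. auto.
    + apply Nat.eqb_neq in Hwa, Hw0. rewrite Hwa, Hw0. auto.
Qed.

Lemma CNF_nonneg I (Priv : alg I -> Prop) : privacy_definition I Priv ->
  forall M, CNF Priv M -> forall D w, 0 <= M D w.
Proof.
  intros HP M HM. induction HM; intros D w.
  - destruct (HP M H D) as [H1 _]. apply H1.
  - apply (series_nonneg (fun v => M D v * A v w)); [|apply H0].
    intros v. apply Rmult_le_pos; [apply IHHM| apply (H v)].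
  - specialize (IHHM1 D w); specialize (IHHM2 D w). nra.
Qed.

Definition delta (k : nat) : nat -> R := fun w => if Nat.eqb w k then 1 else 0.

Lemma delta_dist k : is_distribution (delta k).
Proof.
  split.
  - intros w; unfold delta; destruct (Nat.eqb w k); lra.
  - assert (H : is_series (delta k) (delta k k)).
    { apply series_single. intros j Hj. unfold delta.
      apply Nat.eqb_neq in Hj. rewrite Hj. auto. }
    unfold delta at 2 in H. rewrite Nat.eqb_refl in H. exact H.
Qed.

Lemma CNF_swap I (Priv : alg I -> Prop) M a : CNF Priv M ->
  CNF Priv (fun D w => M D (swap a w)).
Proof.
  intros HM. apply (CNF_post Priv M (fun w => delta (swap a w))); auto.
  - intros w; apply delta_dist.
  - intros D w'.
    replace (M D (swap a w')) with (M D (swap a w') * delta (swap a (swap a w')) w').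
    2:{ rewrite swap_swap. unfold delta; rewrite Nat.eqb_refl; lra. }
    apply (series_single (fun w => M D w * delta (swap a w) w')).
    intros k Hk. unfold delta.
    destruct (Nat.eqb w' (swap a k)) eqn:E; [|lra].
    apply Nat.eqb_eq in E. subst. rewrite swap_swap in Hk. congruence.
Qed.

Lemma swap0 a : swap a 0 = a.
Proof. unfold swap. destruct (Nat.eqb 0 a) eqn:E; auto. apply Nat.eqb_eq in E; auto. Qed.

Theorem theorem2 (I : Type) (Priv : alg I -> Prop) :
  privacy_definition I Priv -> convex_cone (rowcone Priv).
Proof.
  intros HP x y a b [c1 [M1 [w1 [Hc1 [HM1 [[D1 HD1] ->]]]]]]
    [c2 [M2 [w2 [Hc2 [HM2 [[D2 HD2] ->]]]]]] Ha Hb.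
  set (al := a * c1). set (be := b * c2).
  assert (Hal : 0 <= al) by (unfold al; nra).
  assert (Hbe : 0 <= be) by (unfold be; nra).
  destruct (Req_dec (al + be) 0) as [Z|NZ].
  - exists 0, M1, w1. repeat split; auto; [lra| exists D1; auto|].
    apply functional_extensionality; intros D.
    assert (al = 0) by lra. assert (be = 0) by lra.
    unfold al, be in *.
    rewrite <- (Rmult_assoc a), <- (Rmult_assoc b). rewrite H, H0. ring.
  - set (p := al / (al + be)).
    assert (Hp : 0 <= p <= 1).
    { unfold p; split.
      - apply Rdiv_le_0_compat; lra.
      - apply Rmult_le_reg_r with (al + be); [lra|]. unfold Rdiv.
        rewrite Rmult_assoc, Rinv_l; lra. }
    assert (Hpe : p * (al + be) = al).
    { unfold p; field; lra. }
    assert (N1 := CNF_nonneg I Priv HP M1 HM1).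
    assert (N2 := CNF_nonneg I Priv HP M2 HM2).
    exists (al + be), (fun D w => p * M1 D (swap w1 w) + (1 - p) * M2 D (swap w2 w)), 0%nat.
    repeat split; [lra| | |].
    + apply CNF_mix; auto; apply CNF_swap; auto.
    + unfold in_range; simpl; rewrite !swap0.
      destruct (Req_dec al 0) as [Za|Za].
      * exists D2. assert (p = 0) by (unfold p; rewrite Za; unfold Rdiv; lra).
        assert (be > 0) by lra. specialize (N1 D2 w1). nra.
      * exists D1. assert (p > 0) by nra. specialize (N2 D1 w2). nra.
    + apply functional_extensionality; intros D. simpl. rewrite !swap0.
      rewrite <- (Rmult_assoc a), <- (Rmult_assoc b). fold al be.
      replace (al + be) with ((al + be)) by reflexivity.
      assert (Hq : (1 - p) * (al + be) = be) by lra.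
      rewrite Rmult_plus_distr_l, <- !Rmult_assoc, (Rmult_comm (al+be) p),
        (Rmult_comm (al+be) (1-p)), Hpe, Hq. reflexivity.
Qed.
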